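(* Let $\mathcal{C}$ be a permutation class with $p$-basis $\mathcal{B}$, let $\mathcal{M}=\{M_{\tau,top}:\tau\in\mathcal{B}\}$, and let $c_n$ be the number of permutations of size $n$ in $\mathcal{C}$. Then the permutation class $Av_{\mathfrak{S}}(\mathcal{M})$ is enumerated by the sequence $(n\cdot c_{n-1})_n$, i.e. it contains exactly $n\,c_{n-1}$ permutations of size $n$. The same holds when $M_{\tau,top}$ is replaced by $M_{\tau,bottom}$, $M_{\tau,right}$ or $M_{\tau,left}$.
   Context: A permutation $\sigma$ of $\{1,\dots,n\}$ (size $n$) is identified with its permutation matrix ($M_\sigma(i,j)=1$ iff $i=\sigma(j)$, rows numbered bottom to top). A matrix is a submatrix of another if obtained by deleting rows and/or columns; the pattern order on permutations is this order restricted to permutation matrices, and a permutation class is a set closed downward for it. The $p$-basis of $\mathcal{C}$ is the set of permutations not in $\mathcal{C}$ that are minimal for the pattern order among those not in $\mathcal{C}$. For a permutation $\tau$, $M_{\tau,top}$ (resp. $M_{\tau,bottom}$) is the matrix obtained by adding a row of $0$'s above (resp. below) the permutation matrix of $\tau$, and $M_{\tau,right}$ (resp. $M_{\tau,left}$) by adding a column of $0$'s to its right (resp. left). $Av_{\mathfrak{S}}(\mathcal{M})$ is the set of permutations with no submatrix in $\mathcal{M}$. The count $c_0$ refers to the empty permutation (so $c_0=1$ when $n=1$ is considered). *)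

(* Defs.v *)
From mathcomp Require Import all_boot all_fingroup matrix.
From mathcomp Require Import boolp.
Set Implicit Arguments. Unset Strict Implicit. Unset Printing Implicit Defensive.

(* 0/1 matrices are 'M[bool]_(r, c).  Row index 0 is the BOTTOM row
   (rows numbered bottom to top, as in the paper), column 0 the leftmost. *)

Definition submx_of (r c r' c' : nat) (A : 'M[bool]_(r, c)) (B : 'M[bool]_(r', c')) : Prop :=
  exists (f : 'I_r -> 'I_r') (g : 'I_c -> 'I_c'),
    (forall i i' : 'I_r, i < i' -> f i < f i') /\
    (forall j j' : 'I_c, j < j' -> g j < g j') /\
    (forall i j, A i j = B (f i) (g j)).

Definition pmx (n : nat) (s : 'S_n) : 'M[bool]_(n, n) :=
  \matrix_(i, j) (i == s j).

Definition pattern (m n : nat) (s : 'S_m) (t : 'S_n) : Prop := submx_of (pmx s) (pmx t).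

Definition perm_class (C : forall n, 'S_n -> Prop) : Prop :=
  forall m n (s : 'S_m) (t : 'S_n), pattern s t -> C n t -> C m s.

Definition in_pbasis (C : forall n, 'S_n -> Prop) (m : nat) (t : 'S_m) : Prop :=
  ~ C m t /\
  forall k (u : 'S_k), pattern u t -> ~ C k u ->
    existT (fun k => 'S_k) k u = existT (fun k => 'S_k) m t.

(* M_{tau,top}: a row of zeros added above (new top row, index n) *)
Definition Mtop (n : nat) (t : 'S_n) : 'M[bool]_(n.+1, n) :=
  \matrix_(i, j) (nat_of_ord i == nat_of_ord (t j)).
(* M_{tau,bottom}: a row of zeros added below (new row index 0) *)
Definition Mbottom (n : nat) (t : 'S_n) : 'M[bool]_(n.+1, n) :=
  \matrix_(i, j) (nat_of_ord i == (t j).+1).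
(* M_{tau,right}: a column of zeros added on the right (new column index n) *)
Definition Mright (n : nat) (t : 'S_n) : 'M[bool]_(n, n.+1) :=
  \matrix_(i, j) [exists j' : 'I_n, (nat_of_ord j' == nat_of_ord j) && (i == t j')].
(* M_{tau,left}: a column of zeros added on the left (new column index 0) *)
Definition Mleft (n : nat) (t : 'S_n) : 'M[bool]_(n, n.+1) :=
  \matrix_(i, j) [exists j' : 'I_n, ((nat_of_ord j').+1 == nat_of_ord j) && (i == t j')].

Inductive side := Top | Bottom | Right | Left.

Definition contains_ext (sd : side) (k : nat) (t : 'S_k) (n : nat) (s : 'S_n) : Prop :=
  match sd with
  | Top => submx_of (Mtop t) (pmx s)
  | Bottom => submx_of (Mbottom t) (pmx s)
  | Right => submx_of (Mright t) (pmx s)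
  | Left => submx_of (Mleft t) (pmx s)
  end.

Definition Av_ext (C : forall n, 'S_n -> Prop) (sd : side) (n : nat) (s : 'S_n) : Prop :=
  forall k (t : 'S_k), in_pbasis C t -> ~ contains_ext sd t s.

Definition num_of_size (P : forall n, 'S_n -> Prop) (n : nat) : nat :=
  #|[set s : 'S_n | `[< P n s >] ]|.

(* Main.v *)
Require Import Defs.
From mathcomp Require Import all_boot all_fingroup matrix.
From mathcomp Require Import boolp.
Set Implicit Arguments. Unset Strict Implicit. Unset Printing Implicit Defensive.

Lemma ltn_lift n (h : 'I_n) (i j : 'I_n.-1) : (lift h i < lift h j) = (i < j).
Proof. by rewrite /= !ltnNge leq_bump2. Qed.

Section Del.
Variables (m : nat) (s : 'S_m.+1) (j0 : 'I_m.+1).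
Definition delf (x : 'I_m) : 'I_m := odflt x (unlift (s j0) (s (lift j0 x))).
Lemma delf_lift x : lift (s j0) (delf x) = s (lift j0 x).
Proof.
have : s j0 != s (lift j0 x) by rewrite (inj_eq perm_inj) neq_lift.
by case/unlift_some => y Hy Hu; rewrite /delf Hu.
Qed.
Lemma delf_inj : injective delf.
Proof.
move=> x y H; apply: (@lift_inj _ j0); apply: (@perm_inj _ s).
by rewrite -!delf_lift H.
Qed.
Definition del : 'S_m := perm delf_inj.
Lemma del_lift x : lift (s j0) (del x) = s (lift j0 x).
Proof. by rewrite permE delf_lift. Qed.
End Del.


Definition incr a b (f : 'I_a -> 'I_b) := forall i i' : 'I_a, i < i' -> f i < f i'.
Definition occ k n (t : 'S_k) (s : 'S_n) (f : 'I_k -> 'I_n) (g : 'I_k -> 'I_n) :=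
  incr f /\ incr g /\ forall i j, pmx t i j = pmx s (f i) (g j).

Lemma pmxE n (s : 'S_n) i j : pmx s i j = (i == s j).
Proof. by rewrite mxE. Qed.

Lemma occ_col k n (t : 'S_k) (s : 'S_n) f g j0 :
  occ t s f g -> (forall i, f i != s j0) -> forall j, g j != j0.
Proof.
move=> [_ [_ H]] Hf j; apply/eqP => Hj.
move: (H (t j) j); rewrite !pmxE eqxx Hj => /esym/eqP Hf'.
by move: (Hf (t j)); rewrite Hf' eqxx.
Qed.

Lemma occ_row k n (t : 'S_k) (s : 'S_n) f g j0 :
  occ t s f g -> (forall j, g j != j0) -> forall i, f i != s j0.
Proof.
move=> [_ [_ H]] Hg i; apply/eqP => Hi.
move: (H i ((t^-1)%g i)); rewrite !pmxE permKV eqxx Hi => /esym/eqP/perm_inj Hg'.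
by move: (Hg ((t^-1)%g i)); rewrite -Hg' eqxx.
Qed.

Lemma del_pattern m (s : 'S_m.+1) j0 k (t : 'S_k) :
  pattern t (del s j0) <->
  exists f g, occ t s f g /\ (forall i, f i != s j0) /\ (forall j, g j != j0).
Proof.
split.
  move=> [f [g [Hf [Hg H]]]].
  exists (fun i => lift (s j0) (f i)), (fun j => lift j0 (g j)).
  split; last by split=> ? ; rewrite eq_sym neq_lift.
  split; first by move=> i i' /Hf; rewrite ltn_lift.
  split; first by move=> i i' /Hg; rewrite ltn_lift.
  move=> i j; rewrite H !pmxE -del_lift.
  by rewrite (inj_eq (@lift_inj _ _)).
move=> [f [g [[Hf [Hg H]] [Hfa Hga]]]].
have Hf' i : s j0 != f i by rewrite eq_sym.
have Hg' j : j0 != g j by rewrite eq_sym.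
exists (fun i => sval (unlift_some (Hf' i))), (fun j => sval (unlift_some (Hg' j))).
have Ef i : lift (s j0) (sval (unlift_some (Hf' i))) = f i.
  by case: (unlift_some (Hf' i)).
have Eg j : lift j0 (sval (unlift_some (Hg' j))) = g j.
  by case: (unlift_some (Hg' j)).
split; first by move=> i i' /Hf Hl; rewrite -(Ef i) -(Ef i') ltn_lift in Hl.
split; first by move=> i i' /Hg Hl; rewrite -(Eg i) -(Eg i') ltn_lift in Hl.
move=> i j; rewrite H !pmxE -(inj_eq (@lift_inj _ (s j0))) del_lift.
by rewrite Ef Eg.
Qed.

Lemma incr_inj a b (f : 'I_a -> 'I_b) : incr f -> injective f.
Proof.
move=> Hf i j E; apply/eqP; case: (ltngtP i j) => [/Hf|/Hf|/val_inj->//];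
by rewrite E ltnn.
Qed.

Lemma incr_le a b (f : 'I_a -> 'I_b) : incr f -> forall i j : 'I_a, i <= j -> f i <= f j.
Proof.
move=> Hf i j; rewrite leq_eqVlt => /orP [/eqP/val_inj->//|/Hf/ltnW//].
Qed.

Lemma incr_ge a b (f : 'I_a -> 'I_b) : incr f -> forall i : 'I_a, i <= f i.
Proof.
move=> Hf.
suff H : forall n (i : 'I_a), nat_of_ord i = n -> n <= f i by move=> i; exact: H.
elim=> [//|n IH] i Hi.
have Hn : n < a by rewrite -Hi ltnW.
have := IH (Ordinal Hn) erefl.
have : Ordinal Hn < i by rewrite Hi /=.
by move/Hf => H1 H2; apply: leq_ltn_trans H2 H1.
Qed.

Lemma incr_id a (f : 'I_a -> 'I_a) : incr f -> forall i : 'I_a, f i = i.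
Proof.
move=> Hf i.
have finj := incr_inj Hf.
pose g := invF finj.
have Hg : incr g.
  move=> x y Hxy; rewrite ltnNge; apply/negP => H.
  have := incr_le Hf H; rewrite !f_invF => H'.
  by move: (leq_trans Hxy H'); rewrite ltnn.
apply/val_inj/eqP; rewrite eqn_leq (incr_ge Hf) andbT.
by have := incr_ge Hg (f i); rewrite /g invF_f.
Qed.

Lemma pattern_refl n (s : 'S_n) : pattern s s.
Proof. by exists id, id. Qed.

Lemma pattern_trans a b c (s : 'S_a) (t : 'S_b) (u : 'S_c) :
  pattern s t -> pattern t u -> pattern s u.
Proof.
move=> [f [g [Hf [Hg H]]]] [f' [g' [Hf' [Hg' H']]]].
exists (fun i => f' (f i)), (fun j => g' (g j)).
split; first by move=> i i' /Hf /Hf'.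
split; first by move=> i i' /Hg /Hg'.
by move=> i j; rewrite H H'.
Qed.

Lemma pattern_size a b (s : 'S_a) (t : 'S_b) : pattern s t -> a <= b.
Proof.
move=> [f [_ [Hf _]]]; have := leq_card f (incr_inj Hf); by rewrite !card_ord.
Qed.

Lemma pattern_same a (s t : 'S_a) : pattern s t -> s = t.
Proof.
move=> [f [g [Hf [Hg H]]]]; apply/permP => j.
move: (H (s j) j); rewrite (incr_id Hf) (incr_id Hg) !pmxE eqxx.
by move/esym/eqP.
Qed.

Lemma basis_char (C : forall n, 'S_n -> Prop) (HC : perm_class C) m (s : 'S_m) :
  C m s <-> forall k (t : 'S_k), in_pbasis C t -> ~ pattern t s.
Proof.
split.
  by move=> Cs k t [nCt _] P; apply: nCt; exact: HC P Cs.
move=> H; apply: contrapT => nCs.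
have ex : exists k, `[< exists u : 'S_k, pattern u s /\ ~ C k u >].
  by exists m; apply/asboolP; exists s; split => //; exact: pattern_refl.
case: (ex_minnP ex) => k0 /asboolP [u [Pu nCu]] Hmin.
apply: (H k0 u) => //; split => // k' u' Pu' nCu'.
have Hk : k0 <= k'.
  by apply: Hmin; apply/asboolP; exists u'; split => //; exact: pattern_trans Pu' Pu.
have Hk' := pattern_size Pu'.
have E : k' = k0 by apply/anti_leq; rewrite Hk Hk'.
subst k'; by rewrite (pattern_same Pu').
Qed.

Definition rowext k (t : 'S_k) (e : 'I_k.+1) : 'M[bool]_(k.+1, k) :=
  \matrix_(i, j) (if unlift e i is Some a then a == t j else false).
Definition colext k (t : 'S_k) (e : 'I_k.+1) : 'M[bool]_(k, k.+1) :=
  \matrix_(i, j) (if unlift e j is Some a then i == t a else false).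

Lemma rowext_occ m k (t : 'S_k) (s : 'S_m.+1) (e : 'I_k.+1) (j0 v0 : 'I_m.+1)
  (Hv : s j0 = v0)
  (H1 : forall (a : 'I_k) (x y : 'I_m.+1), x < y -> lift e a < e -> x != v0)
  (H2 : forall (a : 'I_k) (x y : 'I_m.+1), y < x -> e < lift e a -> x != v0)
  (H3 : forall (a : 'I_k) (y : 'I_m.+1), y != v0 -> (lift e a < e) = (y < v0)) :
  submx_of (rowext t e) (pmx s) <->
  exists f g, occ t s f g /\ (forall i, f i != s j0) /\ (forall j, g j != j0).
Proof.
rewrite Hv; split.
  move=> [F [G [HF [HG HE]]]].
  have Hocc : occ t s (fun a => F (lift e a)) G.
    split; first by move=> i i' Hl; apply: HF; rewrite ltn_lift.
    split => // i j; by rewrite -HE /rowext mxE liftK pmxE.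
  have Hrow : forall i, F (lift e i) != v0.
    move=> a; case: (ltngtP (lift e a) e) => [Hl|Hl|/val_inj/eqP].
    - exact: H1 (HF _ _ Hl) Hl.
    - exact: H2 (HF _ _ Hl) Hl.
    - by rewrite lift_eqF.
  exists (fun a => F (lift e a)), G; split => //; split => //.
  by apply: occ_col Hocc _; rewrite Hv.
move=> [f [g [[Hf [Hg HE]] [Hfa Hga]]]].
exists (fun i => if unlift e i is Some a then f a else v0), g.
split.
  move=> i i'; case: unliftP => [a ->|->]; case: unliftP => [b ->|->].
  - by rewrite ltn_lift => /Hf.
  - by move=> Hl; rewrite -(H3 a) ?Hfa.
  - move=> Hl; have := H3 b (f b) (Hfa b); rewrite ltnNge (ltnW Hl) /= => /esym/negbT.
    rewrite -leqNgt leq_eqVlt; case/orP => // /eqP E; exfalso; move/eqP: (Hfa b); apply; symmetry; exact: val_inj E.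
  - by rewrite ltnn.
split => // i j; rewrite /rowext mxE; case: unliftP => [a _|_]; first by rewrite -HE pmxE.
by rewrite pmxE -Hv (inj_eq perm_inj) eq_sym (negbTE (Hga j)).
Qed.

Lemma colext_occ m k (t : 'S_k) (s : 'S_m.+1) (e : 'I_k.+1) (j0 : 'I_m.+1)
  (H1 : forall (a : 'I_k) (x y : 'I_m.+1), x < y -> lift e a < e -> x != j0)
  (H2 : forall (a : 'I_k) (x y : 'I_m.+1), y < x -> e < lift e a -> x != j0)
  (H3 : forall (a : 'I_k) (y : 'I_m.+1), y != j0 -> (lift e a < e) = (y < j0)) :
  submx_of (colext t e) (pmx s) <->
  exists f g, occ t s f g /\ (forall i, f i != s j0) /\ (forall j, g j != j0).
Proof.
split.
  move=> [F [G [HF [HG HE]]]].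
  have Hocc : occ t s F (fun a => G (lift e a)).
    split => //; split; first by move=> i i' Hl; apply: HG; rewrite ltn_lift.
    by move=> i j; rewrite -HE /colext mxE liftK pmxE.
  have Hcol : forall j, G (lift e j) != j0.
    move=> a; case: (ltngtP (lift e a) e) => [Hl|Hl|/val_inj/eqP].
    - exact: H1 (HG _ _ Hl) Hl.
    - exact: H2 (HG _ _ Hl) Hl.
    - by rewrite lift_eqF.
  exists F, (fun a => G (lift e a)); split => //; split => //.
  exact: occ_row Hocc _.
move=> [f [g [[Hf [Hg HE]] [Hfa Hga]]]].
exists f, (fun i => if unlift e i is Some a then g a else j0).
split => //; split.
  move=> i i'; case: unliftP => [a ->|->]; case: unliftP => [b ->|->].
  - by rewrite ltn_lift => /Hg.
  - by move=> Hl; rewrite -(H3 a) ?Hga.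
  - move=> Hl; have := H3 b (g b) (Hga b); rewrite ltnNge (ltnW Hl) /= => /esym/negbT.
    rewrite -leqNgt leq_eqVlt; case/orP => // /eqP E; exfalso; move/eqP: (Hga b); apply; symmetry; exact: val_inj E.
  - by rewrite ltnn.
move=> i j; rewrite /colext mxE; case: unliftP => [a _|_]; first by rewrite -HE pmxE.
by rewrite pmxE (negbTE (Hfa i)).
Qed.

Lemma Mtop_eq k (t : 'S_k) : Mtop t = rowext t ord_max.
Proof.
apply/matrixP => i j; rewrite !mxE; case: unliftP => [a ->|->].
  by rewrite lift_max.
by apply/negbTE; rewrite neq_ltn ltn_ord orbT.
Qed.

Lemma Mbottom_eq k (t : 'S_k) : Mbottom t = rowext t ord0.
Proof.
by apply/matrixP => i j; rewrite !mxE; case: unliftP => [a ->|->].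
Qed.

Lemma Mright_eq k (t : 'S_k) : Mright t = colext t ord_max.
Proof.
apply/matrixP => i j; rewrite !mxE; case: unliftP => [a ->|->].
  apply/existsP/idP => [[j' /andP [/eqP E H]]|H].
    by rewrite lift_max in E; rewrite -(val_inj E).
  by exists a; rewrite lift_max eqxx.
by apply/existsP => [[j' /andP [/eqP E _]]]; move: (ltn_ord j'); rewrite E ltnn.
Qed.

Lemma Mleft_eq k (t : 'S_k) : Mleft t = colext t ord0.
Proof.
apply/matrixP => i j; rewrite !mxE; case: unliftP => [a ->|->].
  apply/existsP/idP => [[j' /andP [/eqP E H]]|H].
    by rewrite lift0 in E; case: E => E; rewrite -(val_inj E).
  by exists a; rewrite lift0 eqxx.
by apply/existsP => [[j' /andP [/eqP E _]]].
Qed.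

From mathcomp Require Import zify.

Definition jsel (sd : side) m (s : 'S_m.+1) : 'I_m.+1 :=
  match sd with
  | Top => (s^-1)%g ord_max
  | Bottom => (s^-1)%g ord0
  | Right => ord_max
  | Left => ord0
  end.

Ltac solveH :=
  move=> a x y; rewrite ?lift_max ?lift0 -?val_eqE /=;
  have := ltn_ord a; have := ltn_ord x; have := ltn_ord y; lia.
Ltac solveH3 :=
  move=> a y; rewrite ?lift_max ?lift0 -?val_eqE /=;
  have := ltn_ord a; have := ltn_ord y; move=> *; apply/idP/idP; lia.

Lemma side_char sd m k (t : 'S_k) (s : 'S_m.+1) :
  contains_ext sd t s <-> pattern t (del s (jsel sd s)).
Proof.
rewrite del_pattern; case: sd => /=.
- rewrite Mtop_eq; apply: (@rowext_occ _ _ _ _ _ _ ord_max); first exact: permKV.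
  + solveH.
  + solveH.
  + solveH3.
- rewrite Mbottom_eq; apply: (@rowext_occ _ _ _ _ _ _ ord0); first exact: permKV.
  + solveH.
  + solveH.
  + solveH3.
- rewrite Mright_eq; apply: colext_occ.
  + solveH.
  + solveH.
  + solveH3.
- rewrite Mleft_eq; apply: colext_occ.
  + solveH.
  + solveH.
  + solveH3.
Qed.

Lemma Av_char (C : forall n, 'S_n -> Prop) (HC : perm_class C) sd m (s : 'S_m.+1) :
  Av_ext C sd s <-> C m (del s (jsel sd s)).
Proof.
rewrite (basis_char HC); split => H k t Ht.
  by rewrite -side_char; exact: H.
by rewrite side_char; exact: H.
Qed.

Lemma del_inj m (s1 s2 : 'S_m.+1) j0 :
  s1 j0 = s2 j0 -> del s1 j0 = del s2 j0 -> s1 = s2.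
Proof.
move=> E1 E2; apply/permP => x; case: (unliftP j0 x) => [y ->|->] //.
by rewrite -!del_lift E1 E2.
Qed.

Definition asel sd m (s : 'S_m.+1) : 'I_m.+1 :=
  match sd with
  | Top | Bottom => jsel sd s
  | Right | Left => s (jsel sd s)
  end.

Definition phi sd m (s : 'S_m.+1) : 'I_m.+1 * 'S_m := (asel sd s, del s (jsel sd s)).

Lemma phi_inj sd m : injective (@phi sd m).
Proof.
move=> s1 s2 [Ea Ed].
have [Ej Es] : jsel sd s1 = jsel sd s2 /\ s1 (jsel sd s1) = s2 (jsel sd s2).
  by case: sd Ea Ed => /= Ea Ed; split; rewrite ?permKV.
apply: (del_inj (j0 := jsel sd s1)); first by rewrite Es Ej.
by rewrite {2}Ej; exact: Ed.
Qed.

Theorem corollary2 (C : forall n, 'S_n -> Prop) (HC : perm_class C)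
    (sd : side) (n : nat) :
  n > 0 ->
  num_of_size (Av_ext C sd) n = n * num_of_size C n.-1.
Proof.
case: n => [//|m] _ /=.
rewrite /num_of_size.
set B := [set u : 'S_m | `[< C m u >]].
have -> : [set s : 'S_m.+1 | `[< Av_ext C sd s >]] =
          [set s : 'S_m.+1 | `[< C m (del s (jsel sd s)) >]].
  apply/setP => s; rewrite !inE; have [H1 H2] := Av_char HC sd s.
  by apply/asboolP/asboolP => H; [exact: H1 | exact: H2].
set S := [set s : 'S_m.+1 | _].
have Hbij : bijective (@phi sd m).
  apply: inj_card_bij; first exact: phi_inj.
  by rewrite card_prod !card_Sn card_ord factS.
case: Hbij => g phiK gK.
rewrite -(card_imset _ (@phi_inj sd m)).
have -> : [set phi sd x | x in S] = setX [set: 'I_m.+1] B.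
  apply/setP => [[a u]]; rewrite !inE /=; apply/imsetP/idP.
    by move=> [s]; rewrite inE => Hs [_ ->].
  move=> Hu; exists (g (a, u)); last by rewrite gK.
  by rewrite inE -[del _ _]/((phi sd (g (a, u))).2) gK.
by rewrite cardsX cardsT card_ord.
Qed.
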